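(* If $X$ satisfies $selSS^*_{cd}(\mathcal{O},\Gamma)$, has countable extent, and $|X|<\mathfrak{d}$, then $X$ is selectively strongly star-Menger.
   Context: All spaces are regular. $St(A,\mathcal{U})=\bigcup\{U\in\mathcal{U}:U\cap A\neq\emptyset\}$. $\mathfrak{d}$ is the dominating number. $X$ has countable extent if every closed discrete subset of $X$ is countable. $selSS^*_{cd}(\mathcal{O},\Gamma)$: for every sequence $(\mathcal{U}_n:n\in\omega)$ of open covers and every sequence $(D_n:n\in\omega)$ of dense subsets of $X$ there are sets $C_n\subseteq D_n$, closed and discrete in $X$, such that every $x\in X$ lies in $St(C_n,\mathcal{U}_n)$ for all but finitely many $n$. $X$ is selectively strongly star-Menger if for every sequence $(\mathcal{U}_n)$ of open covers and every sequence $(D_n)$ of dense subsets there are finite $F_n\subseteq D_n$ with $\{St(F_n,\mathcal{U}_n):n\in\omega\}$ covering $X$. *)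

(* Defs.v *)
From HB Require Import structures.
From mathcomp Require Import all_boot all_order.
From mathcomp Require Import all_classical.
From mathcomp Require Import topology.
Set Implicit Arguments. Unset Strict Implicit. Unset Printing Implicit Defensive.
Local Open Scope classical_set_scope.

Definition star {T : Type} (A : set T) (U : set (set T)) : set T :=
  \bigcup_(V in [set V | U V /\ V `&` A !=set0]) V.

Definition open_cover {T : topologicalType} (U : set (set T)) : Prop :=
  (forall V, U V -> open V) /\ (forall x : T, exists2 V, U V & V x).

Definition closed_discrete {T : topologicalType} (C : set T) : Prop :=
  closed C /\ (forall c, C c -> exists V : set T, [/\ open V, V c & V `&` C = [set c]]).

Definition countable_extent (T : topologicalType) : Prop :=
  forall C : set T, closed_discrete C -> countable C.

Definition le_star (f g : nat -> nat) : Prop :=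
  exists N, forall n, (N <= n)%N -> (f n <= g n)%N.

Definition dominating (D : set (nat -> nat)) : Prop :=
  forall f, exists2 g, D g & le_star f g.

(* |X| < d  :  |X| < |D| for every dominating family D
   (d is the least cardinality of a dominating family) *)
Definition card_lt_dominating (T : Type) : Prop :=
  forall D : set (nat -> nat), dominating D ->
    ([set: T] #<= D)%card /\ ~ (D #<= [set: T])%card.

Definition selSS_cd_O_Gamma (T : topologicalType) : Prop :=
  forall (U : nat -> set (set T)) (D : nat -> set T),
    (forall n, open_cover (U n)) -> (forall n, dense (D n)) ->
    exists C : nat -> set T,
      (forall n, C n `<=` D n /\ closed_discrete (C n)) /\
      (forall x : T, exists N, forall n, (N <= n)%N -> star (C n) (U n) x).

Definition selectively_strongly_star_Menger (T : topologicalType) : Prop :=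
  forall (U : nat -> set (set T)) (D : nat -> set T),
    (forall n, open_cover (U n)) -> (forall n, dense (D n)) ->
    exists F : nat -> set T,
      (forall n, finite_set (F n) /\ F n `<=` D n) /\
      (forall x : T, exists n, star (F n) (U n) x).

(* Main.v *)
Require Import Defs.
From mathcomp Require Import all_boot all_order all_classical topology.
Local Open Scope classical_set_scope.

Lemma starE {T : Type} (A : set T) (U : set (set T)) x :
  star A U x <-> exists V, [/\ U V, V x & exists c, V c /\ A c].
Proof.
split.
- by case=> V [UV [c [Vc Ac]]] Vx; exists V; split => //; exists c.
- by case=> V [UV Vx [c [Vc Ac]]]; exists V => //; split => //; exists c.
Qed.

Theorem mainTheorem13 (X : topologicalType) :
  regular_space X -> accessible_space X ->
  selSS_cd_O_Gamma X -> countable_extent X -> card_lt_dominating X ->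
  selectively_strongly_star_Menger X.
Proof.
move=> _ _ hsel hext hcard U D hU hD.
have [C [hC hx]] := hsel U D hU hD.
have hcode : forall n, exists code : X -> nat, {in C n &, injective code}.
  by move=> n; apply/countable_injP/hext; case: (hC n).
have [code hcode'] := choice hcode.
have hf : forall x : X, exists fx : nat -> nat, forall n, star (C n) (U n) x ->
    exists c, [/\ C n c, code n c = fx n & exists V, [/\ U n V, V x & V c]].
  move=> x.
  suff [fx hfx] : {fx : nat -> nat & forall n, star (C n) (U n) x -> exists c,
    [/\ C n c, code n c = fx n & exists V, [/\ U n V, V x & V c]]} by exists fx.
  apply: (@choice nat nat (fun n k => star (C n) (U n) x -> exists c,
    [/\ C n c, code n c = k & exists V, [/\ U n V, V x & V c]])) => n.
  case: (pselect (star (C n) (U n) x)) => [/starE [V [UV Vx [c [Vc Cc]]]]|ns].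
    by exists (code n c) => _; exists c; split => //; exists V.
  by exists 0%N.
have [f hfx] := choice hf.
have notdom : ~ dominating (range f).
  move=> dom; have [_ ] := hcard _ dom; apply.
  exact: card_image_le.
have [g hg] : exists g, forall x, ~ le_star g (f x).
  apply: contrapT => H; apply: notdom => g.
  apply: contrapT => H2; apply: H; exists g => x lef; apply: H2.
  by exists (f x) => //; exists x.
exists (fun n => [set c | C n c /\ (code n c <= g n)%N]); split.
  move=> n; split; last by move=> c [Cc _]; case: (hC n) => /(_ c Cc).
  apply/finite_set_leP; exists (g n).+1.
  apply/pcard_leP/injfunPex; exists (code n).
    by move=> c [_ le] /=; rewrite /= ltnS.
  move=> a b /set_mem [Ca _] /set_mem [Cb _]; apply: hcode'; by apply/mem_set.
move=> x; have [N hN] := hx x.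
apply: contrapT => hno; apply: (hg x); exists N => n Nn.
rewrite leqNgt; apply/negP => lt.
apply: hno; exists n.
have [c [Cc cf [V [UV Vx Vc]]]] := hfx x n (hN n Nn).
apply/starE; exists V; split => //; exists c; split => //; split => //.
by rewrite cf ltnW.
Qed.
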